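(* Let $F$ be a recurrent set on which there exists a positive invariant probability distribution $\pi$. Let $X\subset F$ be a finite bifix code of finite $F$-degree $d$. Then $\sum_{x\in X}|x|\,\pi(x)=d$.
   Context: $A$ is a finite alphabet. $F\subset A^*$ is recurrent if it is nonempty, closed under factors, and for all $u,w\in F$ there is $v\in F$ with $uvw\in F$. An invariant probability distribution on $F$ is a map $\pi:F\to[0,1]$ with $\pi(1)=1$ ($1$ the empty word) and, for every $w\in F$, $\sum_{a\in A,\,wa\in F}\pi(wa)=\pi(w)=\sum_{a\in A,\,aw\in F}\pi(aw)$; it is positive if $\pi(w)>0$ for all $w\in F$. A bifix code is a set of nonempty words none of which is a proper prefix or proper suffix of another. A parse of $w$ with respect to $X$ is a triple $(v,x,u)$ with $w=vxu$, $v$ having no suffix in $X$, $x\in X^*$, $u$ having no prefix in $X$; $\delta_X(w)$ is their number and $d_F(X)=\max_{w\in F}\delta_X(w)$. *)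

(* Defs.v *)
From HB Require Import structures.
From mathcomp Require Import all_boot all_order all_algebra.
Set Implicit Arguments. Unset Strict Implicit. Unset Printing Implicit Defensive.
Import Order.TTheory GRing.Theory Num.Theory.
Local Open Scope ring_scope.

Section Words.
Variable A : finType.
Notation word := (seq A).

Definition factorial (F : pred word) : Prop :=
  forall u v w : word, F (u ++ v ++ w) -> F v.

Definition recurrent (F : pred word) : Prop :=
  (exists w, F w) /\ factorial F /\
  (forall u w, F u -> F w -> exists v, F v /\ F (u ++ v ++ w)).

(* invariant probability distribution on F (values only matter on F) *)
Definition invariant_prob (R : realFieldType) (F : pred word) (pi : word -> R) : Prop :=
  (forall w, F w -> 0 <= pi w <= 1) /\ pi [::] = 1 /\
  (forall w, F w ->
     \sum_(a : A | F (rcons w a)) pi (rcons w a) = pi w /\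
     \sum_(a : A | F (a :: w)) pi (a :: w) = pi w).

Definition positive_on (R : realFieldType) (F : pred word) (pi : word -> R) : Prop :=
  forall w, F w -> 0 < pi w.

Definition bifix_code (X : seq word) : Prop :=
  (forall x, x \in X -> x != [::]) /\
  (forall x y, x \in X -> y \in X -> prefix x y -> x = y) /\
  (forall x y, x \in X -> y \in X -> suffix x y -> x = y).

(* membership in X^* : x is a concatenation of words of X; fuel n suffices
   when n >= size x since each factor of X is nonempty *)
Fixpoint in_star_fuel (X : seq word) (n : nat) (x : word) : bool :=
  match n with
  | 0 => x == [::]
  | n'.+1 => (x == [::]) ||
       has (fun i => (take i x \in X) && in_star_fuel X n' (drop i x))
           (iota 1 (size x))
  end.

Definition in_star (X : seq word) (x : word) : bool := in_star_fuel X (size x) x.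

Definition has_suffix_in (X : seq word) (v : word) : bool := has (fun x => suffix x v) X.
Definition has_prefix_in (X : seq word) (u : word) : bool := has (fun x => prefix x u) X.

(* delta_X(w): number of parses (v,x,u), w = v x u; a parse is determined by
   the two cut points i <= j of w: v = w[0,i), x = w[i,j), u = w[j,|w|) *)
Definition delta (X : seq word) (w : word) : nat :=
  #|[set ij : 'I_(size w).+1 * 'I_(size w).+1 |
       [&& (ij.1 <= ij.2)%N,
           ~~ has_suffix_in X (take ij.1 w),
           in_star X (drop ij.1 (take ij.2 w)) &
           ~~ has_prefix_in X (drop ij.2 w)]]|.

Definition F_degree (F : pred word) (X : seq word) (d : nat) : Prop :=
  (exists w, F w /\ delta X w = d) /\ (forall w, F w -> (delta X w <= d)%N).

End Words.

(* Main.v *)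
Require Import Defs.
From HB Require Import structures.
From mathcomp Require Import all_boot all_order all_algebra.
Set Implicit Arguments. Unset Strict Implicit. Unset Printing Implicit Defensive.
Import Order.TTheory GRing.Theory Num.Theory.

Section Comb.
Variable A : finType.
Notation word := (seq A).

Definition starl (X : seq word) (x : word) :=
  exists s : seq word, all (mem X) s /\ flatten s = x.

Lemma starl_nil X : starl X [::].
Proof. by exists [::]. Qed.

Lemma starl_cat X x y : starl X x -> starl X y -> starl X (x ++ y).
Proof.
move=> [s [hs <-]] [t [ht <-]]; exists (s ++ t).
by rewrite all_cat hs ht flatten_cat.
Qed.

Lemma starl_cons X y x : y \in X -> starl X x -> starl X (y ++ x).
Proof. by move=> hy; apply: starl_cat; exists [:: y]; rewrite /= hy cats0. Qed.

Lemma aux_le a b n : 0 < a -> a + b <= n.+1 -> b <= n.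
Proof. by move=> ha h; rewrite -ltnS (leq_trans _ h) // -add1n leq_add2r. Qed.

Variable X : seq word.
Hypothesis Xne : forall x, x \in X -> x != [::].

Lemma in_star_fuel_starl n x : in_star_fuel X n x -> starl X x.
Proof.
elim: n x => [|n IH] x /=; first by move/eqP->; exact: starl_nil.
case/orP => [/eqP-> | /hasP [i _ /andP [hi hd]]]; first exact: starl_nil.
by rewrite -(cat_take_drop i x); apply: starl_cons => //; apply: IH.
Qed.

Lemma starl_in_star_fuel n x : starl X x -> size x <= n -> in_star_fuel X n x.
Proof.
move=> [s [hs <-]]; elim: n s hs => [|n IH] s hs /=.
  by rewrite leqn0 size_eq0 => ->.
case: (altP (flatten s =P [::])) => [-> //|hne] hsz; apply/orP; right.
case: s hs hne hsz => [//|y s] /= /andP [hy hs] hne hsz.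
apply/hasP; exists (size y).
  rewrite mem_iota size_cat /= add1n; apply/andP; split.
    by rewrite lt0n size_eq0 Xne.
  by rewrite ltnS leq_addr.
rewrite take_size_cat // hy /= drop_size_cat //; apply: IH => //.
move: hsz; rewrite size_cat => h; rewrite -ltnS; apply: leq_trans h.
by rewrite -add1n leq_add2r lt0n size_eq0 Xne.
Qed.

Lemma in_starE x : in_star X x <-> starl X x.
Proof.
split; first exact: in_star_fuel_starl.
by move=> h; apply: starl_in_star_fuel.
Qed.

Lemma greedy z : exists x u, [/\ z = x ++ u, starl X x & ~~ has_prefix_in X u].
Proof.
elim: {z}(size z) {-2}z (leqnn (size z)) => [|n IH] z hz.
  move: hz; rewrite leqn0 size_eq0 => /eqP->; exists [::], [::]; split => //.
    exact: starl_nil.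
  apply/hasP => -[y hy]; rewrite prefixs0 => /eqP ey; move: (Xne hy); by rewrite ey.
case: (boolP (has_prefix_in X z)) => hp; last first.
  by exists [::], z; split => //; exact: starl_nil.
case/hasP: hp => y hy /prefixP [z' ez].
have hz' : size z' <= n.
  move: hz; rewrite ez size_cat; apply: aux_le.
  by rewrite lt0n size_eq0 Xne.
have [x [u [e1 h1 h2]]] := IH z' hz'.
exists (y ++ x), u; split => //; first by rewrite ez e1 catA.
exact: starl_cons.
Qed.

Definition prefix_code := forall x y, x \in X -> y \in X -> prefix x y -> x = y.

Lemma prefix_cmp (y y' a b : word) : y ++ a = y' ++ b -> prefix y y' \/ prefix y' y.
Proof.
move=> e; case: (leqP (size y) (size y')) => h.
  left; rewrite prefixE; have := congr1 (take (size y)) e.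
  by rewrite take_size_cat // takel_cat // => <-.
right; rewrite prefixE; have := congr1 (take (size y')) e.
by rewrite [take _ (y' ++ b)]take_size_cat // takel_cat ?(ltnW h) // => ->.
Qed.

Lemma unique_fact (pc : prefix_code) x u x' u' :
  starl X x -> starl X x' -> ~~ has_prefix_in X u -> ~~ has_prefix_in X u' ->
  x ++ u = x' ++ u' -> x = x'.
Proof.
move=> [s [hs <-]] [s' [hs' <-]] hu hu'.
elim: s s' hs hs' => [|y s IH] [|y' s'] //= hs hs'.
- move=> e; case/andP: hs' => hy' _; case/negP: hu; apply/hasP; exists y' => //.
  by rewrite e -catA prefix_prefix.
- move=> e; case/andP: hs => hy _; case/negP: hu'; apply/hasP; exists y => //.
  by rewrite -e -catA prefix_prefix.
case/andP: hs => hy hs; case/andP: hs' => hy' hs'.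
rewrite -!catA => e.
have eyy : y = y'.
  by case: (prefix_cmp e) => h; [apply: pc | apply/esym; apply: pc].
subst y'; have {}e := congr1 (drop (size y)) e; rewrite !drop_size_cat // in e.
by rewrite (IH s') //.
Qed.

End Comb.

Lemma card_count n (P : pred nat) :
  #|[set i : 'I_n | P i]| = count P (iota 0 n).
Proof.
have -> : iota 0 n = index_iota 0 n by rewrite /index_iota subn0.
rewrite -sum1_card -sum1_count big_mkord.
by apply: eq_bigl => i; rewrite inE.
Qed.

Lemma card_fst n (p : nat -> nat -> bool) (P : pred nat) :
  (forall i j, p i j -> P i) ->
  (forall i, i < n -> P i -> exists2 j, j < n & p i j) ->
  (forall i j j', p i j -> p i j' -> j = j') ->
  #|[set ij : 'I_n * 'I_n | p ij.1 ij.2]| = count P (iota 0 n).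
Proof.
move=> h1 h2 h3; set S := [set _ | _].
have inj : {in S &, injective fst}.
  move=> [i j] [i' j']; rewrite !inE /= => hp hp' ei; subst i'.
  by congr pair; apply: val_inj; apply: h3 hp hp'.
rewrite -(card_in_imset inj) -card_count; apply: eq_card => i.
rewrite inE; apply/imsetP/idP => [[[i' j] hp ->]|hP].
  by move: hp; rewrite inE /= => /h1.
have [j hj hp] := h2 i (ltn_ord i) hP.
by exists (i, Ordinal hj); rewrite // inE.
Qed.

Lemma card_snd n (p : nat -> nat -> bool) (P : pred nat) :
  (forall i j, p i j -> P j) ->
  (forall j, j < n -> P j -> exists2 i, i < n & p i j) ->
  (forall i i' j, p i j -> p i' j -> i = i') ->
  #|[set ij : 'I_n * 'I_n | p ij.1 ij.2]| = count P (iota 0 n).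
Proof.
move=> h1 h2 h3; set S := [set _ | _].
have inj : {in S &, injective snd}.
  move=> [i j] [i' j']; rewrite !inE /= => hp hp' ej; subst j'.
  by congr pair; apply: val_inj; apply: h3 hp hp'.
rewrite -(card_in_imset inj) -card_count; apply: eq_card => j.
rewrite inE; apply/imsetP/idP => [[[i j'] hp ->]|hP].
  by move: hp; rewrite inE /= => /h1.
have [i hi hp] := h2 j (ltn_ord j) hP.
by exists (Ordinal hi, j); rewrite // inE.
Qed.

Section Parse.
Variable A : finType.
Notation word := (seq A).

Lemma starl_rev (X : seq word) x : starl X x -> starl (map rev X) (rev x).
Proof.
move=> [s [hs <-]]; exists (rev (map rev s)); split; last by rewrite rev_flatten.
rewrite all_rev all_map; apply/allP => y hy /=; rewrite (mem_map (inv_inj (@revK _))); exact: (allP hs).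

Qed.

Lemma hp_rev (X : seq word) u : has_prefix_in (map rev X) (rev u) = has_suffix_in X u.
Proof. by rewrite /has_prefix_in /has_suffix_in has_map; apply: eq_has => x /=; rewrite prefix_rev. Qed.

Variable X : seq word.
Hypothesis hX : bifix_code X.

Lemma Xne : forall x, x \in X -> x != [::].
Proof. by case: hX. Qed.

Lemma pcX : prefix_code X.
Proof. by case: hX => _ []. Qed.

Let rX := map rev X.

Lemma rXne : forall x, x \in rX -> x != [::].
Proof. by move=> x /mapP [y hy ->]; rewrite -size_eq0 size_rev size_eq0 Xne. Qed.

Lemma pcrX : prefix_code rX.
Proof.
move=> x y /mapP [x' hx ->] /mapP [y' hy ->]; rewrite prefix_rev => h.
by case: hX => _ [_ h3]; rewrite (h3 _ _ hx hy h).
Qed.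

Lemma rrX : map rev rX = X.
Proof. by rewrite /rX -map_comp (eq_map revK) map_id. Qed.

Lemma sgreedy z : exists u x, [/\ z = u ++ x, starl X x & ~~ has_suffix_in X u].
Proof.
have [x [u [e h1 h2]]] := greedy rXne (rev z).
exists (rev u), (rev x); split.
- by rewrite -rev_cat -e revK.
- by rewrite -rrX; apply: starl_rev.
- by rewrite -hp_rev revK.
Qed.

Lemma sunique u x u' x' :
  starl X x -> starl X x' -> ~~ has_suffix_in X u -> ~~ has_suffix_in X u' ->
  u ++ x = u' ++ x' -> x = x'.
Proof.
move=> h1 h2 h3 h4 e; apply: (inv_inj (@revK _));
apply: (@unique_fact A rX pcrX (rev x) (rev u) (rev x') (rev u'));
  rewrite ?hp_rev //; try exact: starl_rev.
by rewrite -!rev_cat e.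
Qed.

Definition parse (w : word) i j := [&& i <= j, j <= size w,
  ~~ has_suffix_in X (take i w), in_star X (drop i (take j w)) &
  ~~ has_prefix_in X (drop j w)].

Lemma parse_uniq_j w i j j' : parse w i j -> parse w i j' -> j = j'.
Proof.
have key : forall k, i <= k -> k <= size w ->
  drop i (take k w) = take (k - i) (drop i w) /\ drop k w = drop (k - i) (drop i w).
  move=> k h1 h2; rewrite take_drop drop_drop subnK //.
case/and5P => h1 h2 h3 h4 h5; case/and5P => h1' h2' _ h4' h5'.
have [e1 e2] := key j h1 h2; have [e1' e2'] := key j' h1' h2'.
move: h4 h4' h5 h5'; rewrite e1 e1' e2 e2' => /(in_starE Xne) h4
  /(in_starE Xne) h4' h5 h5'.
have := unique_fact pcX h4 h4' h5 h5'; rewrite !cat_take_drop => /(_ erefl).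
move/(congr1 size); rewrite !size_takel ?size_drop ?leq_sub2r //.
by move=> e; rewrite -(subnK h1) -(subnK h1') e.
Qed.

Lemma parse_ex_j w i : i <= size w -> ~~ has_suffix_in X (take i w) ->
  exists2 j, j < (size w).+1 & parse w i j.
Proof.
move=> hi hs; have [x [u [e h1 h2]]] := greedy Xne (drop i w).
have hsz : size x + size u = size w - i by rewrite -size_cat -e size_drop.
have hj : i + size x <= size w.
  by rewrite -leq_subRL // -hsz leq_addr.
exists (i + size x); first by rewrite ltnS.
apply/and5P; split => //; first exact: leq_addr.
  by rewrite addnC -take_drop e take_size_cat //; apply/(in_starE Xne).
by rewrite addnC -drop_drop e drop_size_cat.
Qed.

Lemma parse_uniq_i w i i' j : parse w i j -> parse w i' j -> i = i'.
Proof.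
have key : forall k, k <= j -> j <= size w ->
  take k w = take k (take j w) /\ take j w = take k (take j w) ++ drop k (take j w).
  by move=> k h1 h2; split; [rewrite take_takel | rewrite cat_take_drop].
case/and5P => h1 h2 h3 h4 h5; case/and5P => h1' h2' h3' h4' h5'.
have [e1 e2] := key i h1 h2; have [e1' e2'] := key i' h1' h2'.
move: h3 h3' h4 h4'; rewrite e1 e1' => h3 h3' /(in_starE Xne) h4
  /(in_starE Xne) h4'.
have := sunique h4 h4' h3 h3'; rewrite !cat_take_drop => /(_ erefl).
move/(congr1 size); rewrite !size_drop size_takel // => e.
by rewrite -(subKn h1) -(subKn h1') e.
Qed.

Lemma parse_ex_i w j : j <= size w -> ~~ has_prefix_in X (drop j w) ->
  exists2 i, i < (size w).+1 & parse w i j.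
Proof.
move=> hj hp; have [u [x [e h1 h2]]] := sgreedy (take j w).
have hsz : size u + size x = j by rewrite -size_cat -e size_takel.
have hi : size u <= j by rewrite -hsz leq_addr.
exists (size u); first by rewrite ltnS (leq_trans hi).
apply/and5P; split => //.
  by rewrite -(take_takel _ hi) e take_size_cat.
by rewrite e drop_size_cat //; apply/(in_starE Xne).
Qed.

Lemma delta_P w :
  delta X w = count (fun i => ~~ has_suffix_in X (take i w)) (iota 0 (size w).+1).
Proof.
rewrite /delta; rewrite -(card_fst (p := parse w)).
- by apply: eq_card => ij; rewrite !inE /parse (_ : ij.2 <= size w = true) // -ltnS ltn_ord.
- by move=> i j /and5P [].
- move=> i hi; apply: parse_ex_j; by rewrite -ltnS.
- exact: parse_uniq_j.
Qed.

Lemma delta_Q w :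
  delta X w = count (fun j => ~~ has_prefix_in X (drop j w)) (iota 0 (size w).+1).
Proof.
rewrite /delta; rewrite -(card_snd (p := parse w)).
- by apply: eq_card => ij; rewrite !inE /parse (_ : ij.2 <= size w = true) // -ltnS ltn_ord.
- by move=> i j /and5P [].
- move=> j hj; apply: parse_ex_i; by rewrite -ltnS.
- exact: parse_uniq_i.
Qed.

End Parse.

Section Delta.
Variable A : finType.
Notation word := (seq A).
Variable X : seq word.
Hypothesis hX : bifix_code X.

Lemma delta_rcons w a :
  delta X (rcons w a) = delta X w + ~~ has_suffix_in X (rcons w a).
Proof.
rewrite !(delta_P hX) size_rcons.
have -> : iota 0 (size w).+2 = iota 0 (size w).+1 ++ [:: (size w).+1].
  by rewrite -addn1 iotaD.
rewrite count_cat (_ : count _ [:: (size w).+1] = ~~ has_suffix_in X (rcons w a)); last first.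
  by rewrite /= addn0 take_oversize // size_rcons.
congr (_ + _).
apply: eq_in_count => i; rewrite mem_iota add0n ltnS => hi.
by rewrite -cats1 takel_cat.
Qed.

Lemma delta_cons a w :
  delta X (a :: w) = ~~ has_prefix_in X (a :: w) + delta X w.
Proof.
rewrite !(delta_Q hX).
have -> : iota 0 (size (a :: w)).+1 = 0 :: map succn (iota 0 (size w).+1).
  have := iotaDl 1 0 (size w).+1; rewrite addn0 /= => ->.
  by congr (_ :: _); apply: eq_map => i; rewrite add1n.
by rewrite /= count_map drop0.
Qed.

Lemma delta_catr w t : delta X w <= delta X (w ++ t).
Proof.
elim/last_ind: t => [|t a IH]; first by rewrite cats0.
by rewrite -rcons_cat delta_rcons (leq_trans IH) ?leq_addr.
Qed.

Lemma delta_catl w t : delta X w <= delta X (t ++ w).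
Proof.
elim: t => [|a t IH] //=.
by rewrite delta_cons (leq_trans IH) ?leq_addl.
Qed.

Lemma prefix_catS (x z p : word) : prefix x (z ++ p) -> size x <= size z -> prefix x z.
Proof. by rewrite !prefixE => h hs; rewrite -(takel_cat p hs). Qed.

Lemma suffix_catS (x z p : word) : suffix x (p ++ z) -> size x <= size z -> suffix x z.
Proof.
rewrite /suffix rev_cat => h hs; apply: prefix_catS h _; by rewrite !size_rev.
Qed.

Variable F : pred word.
Hypothesis hfac : Defs.factorial F.
Hypothesis hrec : forall u w, F u -> F w -> exists v, F v /\ F (u ++ v ++ w).
Variable d : nat.
Hypothesis hdeg : F_degree F X d.

Definition L := \max_(x <- X) size x.

Lemma size_L x : x \in X -> size x <= L.
Proof. by move=> hx; rewrite /L (big_rem x hx) /= leq_maxl. Qed.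

Lemma long_suffix z : F z -> z != [::] -> L <= size z -> has_suffix_in X z.
Proof.
move=> Fz zne hL; apply/negPn/negP => hs.
case: hdeg => [[w0 [Fw0 dw0]] hle].
have [v [_ Fv]] := hrec Fw0 Fz.
move: Fz zne Fv hs hL; case/lastP: z => [//|z' a] Fz _ Fv hs hL.
have := hle _ Fv; rewrite catA -rcons_cat delta_rcons.
have -> : ~~ has_suffix_in X (rcons ((w0 ++ v) ++ z') a).
  apply/hasP => -[x hx hxs]; move/negP: hs; apply; apply/hasP; exists x => //.
  apply: (suffix_catS (p := w0 ++ v)); first by rewrite -rcons_cat.
  exact: leq_trans (size_L hx) hL.
rewrite -catA /= addn1 ltnNge; have := delta_catr w0 (v ++ z'); rewrite dw0 => ->.
done.
Qed.

Lemma long_prefix z : F z -> z != [::] -> L <= size z -> has_prefix_in X z.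
Proof.
move=> Fz zne hL; apply/negPn/negP => hs.
case: hdeg => [[w0 [Fw0 dw0]] hle].
have [v [_ Fv]] := hrec Fz Fw0.
move: Fz zne Fv hs hL; case: z => [//|a z'] Fz _ Fv hs hL.
have := hle _ Fv; rewrite cat_cons delta_cons.
have -> : ~~ has_prefix_in X (a :: (z' ++ v ++ w0)).
  apply/hasP => -[x hx hxs]; move/negP: hs; apply; apply/hasP; exists x => //.
  apply: (prefix_catS (p := v ++ w0)); first by rewrite cat_cons.
  exact: leq_trans (size_L hx) hL.
rewrite /= add1n ltnNge; have := delta_catl w0 (z' ++ v); rewrite dw0 -catA => ->.
done.
Qed.

Lemma long_delta w : F w -> w != [::] -> L <= size w -> delta X w = d.
Proof.
move=> Fw wne hL; case: hdeg => [[w0 [Fw0 dw0]] hle].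
have [v [_ Fv]] := hrec Fw Fw0.
have key : forall t, F (w ++ t) -> delta X (w ++ t) = delta X w.
  elim/last_ind => [|t a IH]; first by rewrite cats0.
  rewrite -rcons_cat => Fr.
  have Ft : F (w ++ t) by apply: (hfac (u := [::]) (w := [:: a])); rewrite /= cats1.
  rewrite delta_rcons long_suffix //.
  - by rewrite addn0 IH.
  - by rewrite -size_eq0 size_rcons.
  - by rewrite size_rcons size_cat (leq_trans hL) // -addnS leq_addr.
apply/eqP; rewrite eqn_leq hle //= -(key _ Fv) -dw0 catA; exact: delta_catl.
Qed.

End Delta.
Local Open Scope ring_scope.

Section Sums.
Variable A : finType.
Notation word := (seq A).
Variable R : realFieldType.
Variable F : pred word.
Hypothesis hfac : Defs.factorial F.

Definition W n : seq word := map val (enum {: n.-tuple A}).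

Lemma mem_W n z : (z \in W n) = (size z == n)%N.
Proof.
apply/mapP/idP => [[t _ ->]|hz]; first by rewrite size_tuple.
by exists (Tuple hz); rewrite ?mem_enum.
Qed.

Lemma uniq_W n : uniq (W n).
Proof. by rewrite map_inj_uniq ?enum_uniq //; exact: val_inj. Qed.

Definition S n (g : word -> R) := \sum_(z <- W n | F z) g z.

Lemma rsplit n g : S n.+1 g =
  \sum_(w <- W n | F w) \sum_(a | F (rcons w a)) g (rcons w a).
Proof.
have pe : perm_eq (W n.+1) [seq rcons w a | w <- W n, a <- index_enum A].
  apply: uniq_perm; first exact: uniq_W.
    apply: allpairs_uniq; [exact: uniq_W | exact: index_enum_uniq |].
    by move=> [w a] [w' a'] _ _ /= /rcons_inj.
  move=> z; rewrite mem_W; apply/idP/allpairsP => [|[[w a] /= [hw _ ->]]].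
    case/lastP: z => [//|w a]; rewrite size_rcons eqSS => hw.
    by exists (w, a); rewrite /= mem_W hw mem_index_enum.
  by rewrite size_rcons; rewrite mem_W in hw.
rewrite /S (perm_big _ pe) /= big_mkcond big_allpairs_dep /=.
rewrite [RHS]big_mkcond /=; apply: eq_bigr => w _.
case: (boolP (F w)) => Fw; first by rewrite [RHS]big_mkcond.
apply: big1 => a _; case: ifP => // Fr; case/negP: Fw.
by apply: (hfac (u := [::]) (w := [:: a])); rewrite /= cats1.
Qed.

Lemma lsplit n g : S n.+1 g =
  \sum_(w <- W n | F w) \sum_(a | F (a :: w)) g (a :: w).
Proof.
have pe : perm_eq (W n.+1) [seq a :: w | w <- W n, a <- index_enum A].
  apply: uniq_perm; first exact: uniq_W.
    apply: allpairs_uniq; [exact: uniq_W | exact: index_enum_uniq |].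
    by move=> [w a] [w' a'] _ _ /= [-> ->].
  move=> z; rewrite mem_W; apply/idP/allpairsP => [|[[w a] /= [hw _ ->]]].
    case: z => [//|a w]; rewrite /= eqSS => hw.
    by exists (w, a); rewrite /= mem_W hw mem_index_enum.
  by rewrite mem_W in hw.
rewrite /S (perm_big _ pe) /= big_mkcond big_allpairs_dep /=.
rewrite [RHS]big_mkcond /=; apply: eq_bigr => w _.
case: (boolP (F w)) => Fw; first by rewrite [RHS]big_mkcond.
apply: big1 => a _; case: ifP => // Fr; case/negP: Fw.
by apply: (hfac (u := [:: a]) (w := [::])); rewrite /= cats0.
Qed.

Lemma S0 g : S 0 g = if F [::] then g [::] else 0.
Proof.
have pe : perm_eq (W 0) [:: [::]].
  apply: uniq_perm => //; first exact: uniq_W.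
  by move=> z; rewrite mem_W inE size_eq0.
rewrite /S (perm_big _ pe) big_cons big_nil; case: (F [::]) => //; exact: addr0.
Qed.

Lemma S_ext n g g' : (forall z, F z -> size z = n -> g z = g' z) -> S n g = S n g'.
Proof.
move=> h; rewrite /S !(big_seq_cond (fun z => F z)); apply: eq_bigr => z.
by case/andP; rewrite mem_W => /eqP hz Fz; apply: h.
Qed.

End Sums.
Local Open Scope ring_scope.

Section Main.
Variable A : finType.
Notation word := (seq A).
Variable R : realFieldType.
Variable F : pred word.
Variable pi : word -> R.
Variable X : seq word.
Hypothesis hrecur : recurrent F.
Hypothesis hinv : invariant_prob F pi.
Hypothesis uX : uniq X.
Hypothesis XF : forall x, x \in X -> F x.
Hypothesis hX : bifix_code X.

Lemma hfac : Defs.factorial F.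
Proof. by case: hrecur => _ []. Qed.

Lemma Fnil : F [::].
Proof.
case: hrecur => [[w1 Fw] [hf _]].
by apply: (hf w1 [::] [::]); rewrite /= cats0.
Qed.

Lemma pi_nil : pi [::] = 1.
Proof. by case: hinv => _ []. Qed.

Lemma inv_r w : F w -> \sum_(a | F (rcons w a)) pi (rcons w a) = pi w.
Proof. by case: hinv => _ [_ h] /h []. Qed.

Lemma inv_l w : F w -> \sum_(a | F (a :: w)) pi (a :: w) = pi w.
Proof. by case: hinv => _ [_ h] /h []. Qed.

Lemma S_pi n : S F n pi = 1.
Proof.
elim: n => [|n IH]; first by rewrite S0 Fnil pi_nil.
rewrite (rsplit hfac) -IH; apply: eq_bigr => w Fw; exact: inv_r.
Qed.

Lemma sum_suffix x m : F x ->
  S F m (fun z => if suffix x z then pi z else 0) =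
  if (size x <= m)%N then pi x else 0.
Proof.
move=> Fx; case: (leqP (size x) m) => hm; last first.
  rewrite (@S_ext _ _ _ _ _ (fun=> 0)); first by rewrite /S big1.
  move=> z Fz hz; case: ifP => // /size_suffix; rewrite hz leqNgt hm //.
rewrite -(subnK hm); elim: (m - size x)%N => [|k IH].
  rewrite add0n /S big_seq_cond big_mkcond (bigD1_seq x) ?uniq_W //;
    last by rewrite mem_W.
  rewrite mem_W eqxx Fx suffix_refl /= big1 ?addr0 // => z zx.
  case: ifP => // /andP [hz Fz]; case: ifP => // hs; exfalso; move/negP: zx; apply.
  by move: hs; rewrite suffixE mem_W in hz *; rewrite (eqP hz) subnn drop0.
rewrite addSn -IH.
transitivity (S F (k + size x) (fun w => \sum_(a | F (a :: w))
  (if suffix x (a :: w) then pi (a :: w) else 0))); first exact: (lsplit hfac).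
apply: S_ext => w Fw hw.
have e : forall a, suffix x (a :: w) = suffix x w.
  move=> a; apply/idP/idP => h; last exact: (suffix_catr [:: a] h).
  by apply: (suffix_catS (p := [:: a])); rewrite // hw leq_addl.
under eq_bigr do rewrite e.
by case: ifP => _; [exact: inv_l | rewrite big1].
Qed.


Lemma hrec : forall u w, F u -> F w -> exists v, F v /\ F (u ++ v ++ w).
Proof. by case: hrecur => _ []. Qed.

Lemma suffix_eq x y z : x \in X -> y \in X -> suffix x z -> suffix y z -> x = y.
Proof.
move=> hx hy /suffixP [p ep] /suffixP [q eq].
have e : rev x ++ rev p = rev y ++ rev q by rewrite -!rev_cat -ep -eq.
case: hX => _ [_ h3].
by case: (prefix_cmp e); rewrite prefix_rev => h; [apply: h3 | apply/esym; apply: h3].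
Qed.

Lemma has_suffix_sum z :
  \sum_(x <- X) (if suffix x z then pi z else 0) =
  if has_suffix_in X z then pi z else 0.
Proof.
case: (boolP (has_suffix_in X z)) => [/hasP [x0 hx0 hs0] | hn].
  rewrite (big_rem x0 hx0) /= hs0 big_seq big1 ?addr0 // => x hx.
  case: ifP => // hs; exfalso; move: hx; rewrite mem_rem_uniq // inE => /andP [nx hx].
  by move/negP: nx; apply; apply/eqP; apply: (suffix_eq hx hx0 hs hs0).
rewrite big_seq big1 // => x hx; case: ifP => // hs; case/negP: hn.
by apply/hasP; exists x.
Qed.

Lemma nosuffix_S m : S F m (fun z => pi z * (~~ has_suffix_in X z)%:R) =
  1 - \sum_(x <- X) (if (size x <= m)%N then pi x else 0).
Proof.
rewrite (@S_ext _ _ _ _ _ (fun z => pi z - \sum_(x <- X) (if suffix x z then pi z else 0))).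
  rewrite /S sumrB -/(S F m pi) S_pi; congr (_ - _).
  rewrite exchange_big /=; rewrite big_seq [RHS]big_seq; apply: eq_bigr => x hx.
  exact: sum_suffix (XF hx).
move=> z _ _; rewrite has_suffix_sum; case: (has_suffix_in X z) => /=.
  by rewrite mulr0 subrr.
by rewrite mulr1 subr0.
Qed.

Definition D n := S F n (fun z => pi z * (delta X z)%:R).

Lemma Dstep n : D n.+1 = D n + S F n.+1 (fun z => pi z * (~~ has_suffix_in X z)%:R).
Proof.
rewrite /D !(rsplit hfac) -big_split /=; apply: eq_bigr => w Fw.
rewrite -(inv_r Fw) mulr_suml -big_split /=; apply: eq_bigr => a _.
by rewrite (delta_rcons hX) natrD mulrDr.
Qed.

Variable d : nat.
Hypothesis hdeg : F_degree F X d.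

Lemma delta_nil : delta X [::] = 1%N.
Proof.
rewrite (delta_P hX) /=; case: hX => hne _.
rewrite /has_suffix_in; case: hasP => // -[x hx]; rewrite suffixs0 => /eqP ex.
by move: (hne _ hx); rewrite ex.
Qed.

Definition N := maxn (L X) 1.

Lemma piX : \sum_(x <- X) pi x = 1.
Proof.
have h0 : S F N.+1 (fun z => pi z * (~~ has_suffix_in X z)%:R) = 0.
  rewrite /S big_seq_cond big1 // => z /andP [hz Fz]; rewrite mem_W in hz.
  rewrite (long_suffix hX hrec hdeg Fz).
  - by rewrite mulr0.
  - by rewrite -size_eq0 (eqP hz).
  - by rewrite (eqP hz) (leq_trans (leq_maxl _ 1)).
move: h0; rewrite nosuffix_S => /eqP; rewrite subr_eq0 => /eqP ->.
rewrite big_seq [RHS]big_seq; apply: eq_bigr => x hx.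
by rewrite (leq_trans (size_L hx)) // (leq_trans (leq_maxl _ 1)).
Qed.

Definition E n := \sum_(x <- X) pi x * (minn (size x) n.+1)%:R.

Lemma DE n : D n = E n.
Proof.
case: hX => hne _.
have pos : forall x, x \in X -> (0 < size x)%N by move=> x /hne; rewrite lt0n size_eq0.
elim: n => [|n IH].
  rewrite /D S0 Fnil pi_nil delta_nil mul1r /E.
  rewrite [LHS](_ : _ = \sum_(x <- X) pi x); last by rewrite piX.
  rewrite big_seq [RHS]big_seq.
  apply: eq_bigr => x hx; rewrite (minn_idPr _) ?mulr1 //; exact: pos.
rewrite Dstep IH nosuffix_S /E.
rewrite (_ : 1 - _ = \sum_(x <- X) (pi x - if (size x <= n.+1)%N then pi x else 0));
  last by rewrite sumrB piX.
rewrite -big_split /=.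
rewrite big_seq [RHS]big_seq; apply: eq_bigr => x hx.
case: (leqP (size x) n.+1) => h.
  by rewrite subrr addr0 (minn_idPl (leq_trans h (leqnSn _))).
by rewrite subr0 (minn_idPr h) -[n.+2]addn1 natrD mulrDr mulr1.
Qed.

Theorem main_sum : \sum_(x <- X) (size x)%:R * pi x = d%:R.
Proof.
have hD : D N = d%:R.
  rewrite /D (@S_ext _ _ _ _ _ (fun z => pi z * d%:R)).
    by rewrite /S -mulr_suml -/(S F N pi) S_pi mul1r.
  move=> z Fz hz; rewrite (long_delta hX hfac hrec hdeg Fz) //.
    by rewrite -size_eq0 hz -lt0n leq_maxr.
  by rewrite hz leq_maxl.
rewrite -hD DE /E big_seq [RHS]big_seq; apply: eq_bigr => x hx.
rewrite mulrC (minn_idPl _) //; apply: (leq_trans (size_L hx)).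
by rewrite (leq_trans (leq_maxl _ 1)).
Qed.

End Main.

Theorem mainTheorem6 (A : finType) (R : realFieldType)
  (F : pred (seq A)) (pi : seq A -> R) (X : seq (seq A)) (d : nat) :
  recurrent F ->
  invariant_prob F pi -> positive_on F pi ->
  uniq X -> (forall x, x \in X -> F x) -> bifix_code X ->
  F_degree F X d ->
  \sum_(x <- X) (size x)%:R * pi x = d%:R.
Proof.
move=> hr hi _ hu hXF hX hd; exact: (main_sum hr hi hu hXF hX hd).
Qed.
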